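(* Let $\overline{\mathrm{PRCN}}\subseteq\mathbb{R}$ be the set of real numbers of the form $I+\sum_{i=1}^\infty P(i)2^{-i}$ with $I\in\mathbb{Z}$ and $P:\mathbb{Z}^+\to\{0,1\}$ primitive recursive, and let $\overline{\mathrm{SPRCN}}\subseteq\mathbb{R}$ be the set of real numbers of the form $I+\sum_{i=1}^\infty P(i)2^{-i}$ with $I\in\mathbb{Z}$ and $P:\mathbb{Z}^+\to\{-1,0,1\}$ primitive recursive. Then $\overline{\mathrm{PRCN}}\subsetneq\overline{\mathrm{SPRCN}}$; that is, there is a real number which is the value of some signed primitive recursive binary series with digits in $\{-1,0,1\}$ but which has no binary expansion (with digits in $\{0,1\}$, after an integer part) given by a primitive recursive digit function.
   Context: A function $\mathbb{Z}^+\to\{0,1\}$ or $\mathbb{Z}^+\to\{-1,0,1\}$ is primitive recursive if it is obtained from a primitive recursive $P':\mathbb{N}\to\mathbb{N}$ via a primitive recursive encoding of the finitely many values. *)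

(* Defs.v *)
From Stdlib Require Import Reals List Arith ZArith.
Import ListNotations.
Open Scope R_scope.

(** Primitive recursive functions N^k -> N, represented as functions on
    lists of naturals (only the values on lists of length k matter). *)
Definition prec_fun (f : list nat -> nat) (g : list nat -> nat)
  : list nat -> nat :=
  fun v => match v with
           | [] => f []
           | n :: w => nat_rect (fun _ => nat) (f w)
                                (fun m r => g (m :: r :: w)) n
           end.

Inductive is_prim_rec : nat -> (list nat -> nat) -> Prop :=
| PR_zero (k : nat) : is_prim_rec k (fun _ => 0%nat)
| PR_succ : is_prim_rec 1 (fun v => S (hd 0%nat v))
| PR_proj (k i : nat) : (i < k)%nat -> is_prim_rec k (fun v => nth i v 0%nat)
| PR_comp (k m : nat) (g : list nat -> nat) (hs : nat -> list nat -> nat) :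
    is_prim_rec m g ->
    (forall i, (i < m)%nat -> is_prim_rec k (hs i)) ->
    is_prim_rec k (fun v => g (map (fun i => hs i v) (seq 0 m)))
| PR_rec (k : nat) (f g : list nat -> nat) :
    is_prim_rec k f -> is_prim_rec (S (S k)) g ->
    is_prim_rec (S k) (prec_fun f g)
| PR_ext (k : nat) (f g : list nat -> nat) :
    is_prim_rec k f ->
    (forall v, length v = k -> f v = g v) -> is_prim_rec k g.

Definition prim_rec1 (P' : nat -> nat) : Prop :=
  is_prim_rec 1 (fun v => P' (hd 0%nat v)).

Definition pr_bit_digits (P : nat -> Z) : Prop :=
  exists P' : nat -> nat, prim_rec1 P' /\
    forall i, (1 <= i)%nat -> (P' i <= 1)%nat /\ P i = Z.of_nat (P' i).

Definition pr_signed_digits (P : nat -> Z) : Prop :=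
  exists P' : nat -> nat, prim_rec1 P' /\
    forall i, (1 <= i)%nat -> (P' i <= 2)%nat /\ P i = (Z.of_nat (P' i) - 1)%Z.

Definition binary_series_value (I : Z) (P : nat -> Z) (x : R) : Prop :=
  infinite_sum (fun n => IZR (P (S n)) / 2 ^ (S n)) (x - IZR I).

Definition PRCN (x : R) : Prop :=
  exists (I : Z) (P : nat -> Z), pr_bit_digits P /\ binary_series_value I P x.

Definition SPRCN (x : R) : Prop :=
  exists (I : Z) (P : nat -> Z), pr_signed_digits P /\ binary_series_value I P x.

(* Main.v *)
Require Import Defs.
From Stdlib Require Import Reals.
From Stdlib Require Import List Arith ZArith Lia Lra ConstructiveEpsilon.
Import ListNotations.
Open Scope nat_scope.

Open Scope nat_scope.

Definition pr1 (f : nat -> nat) := is_prim_rec 1 (fun v => f (nth 0 v 0)).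
Definition pr2 (f : nat -> nat -> nat) := is_prim_rec 2 (fun v => f (nth 0 v 0) (nth 1 v 0)).
Definition pr3 (f : nat -> nat -> nat -> nat) :=
  is_prim_rec 3 (fun v => f (nth 0 v 0) (nth 1 v 0) (nth 2 v 0)).

Lemma pr_c1 k f a : pr1 f -> is_prim_rec k a -> is_prim_rec k (fun v => f (a v)).
Proof.
  intros Hf Ha.
  apply (PR_comp k 1 _ (fun _ => a) Hf). intros i Hi; exact Ha.
Qed.

Lemma pr_c2 k f a b : pr2 f -> is_prim_rec k a -> is_prim_rec k b ->
  is_prim_rec k (fun v => f (a v) (b v)).
Proof.
  intros Hf Ha Hb.
  apply (PR_comp k 2 _ (fun i => match i with 0 => a | _ => b end) Hf).
  intros [|i] Hi; auto.
Qed.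

Lemma pr_c3 k f a b c : pr3 f -> is_prim_rec k a -> is_prim_rec k b -> is_prim_rec k c ->
  is_prim_rec k (fun v => f (a v) (b v) (c v)).
Proof.
  intros Hf Ha Hb Hc.
  apply (PR_comp k 3 _ (fun i => match i with 0 => a | 1 => b | _ => c end) Hf).
  intros [|[|i]] Hi; auto.
Qed.

Lemma pr_const k c : is_prim_rec k (fun _ => c).
Proof.
  induction c.
  - apply PR_zero.
  - assert (pr1 S).
    { eapply PR_ext. apply PR_succ. intros v _. destruct v; reflexivity. }
    exact (pr_c1 k S (fun _ => c) H IHc).
Qed.

Lemma pr_proj k i : i < k -> is_prim_rec k (fun v => nth i v 0).
Proof. apply PR_proj. Qed.

Lemma pr_S : pr1 S.
Proof. eapply PR_ext. apply PR_succ. intros v _. destruct v; reflexivity. Qed.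

Lemma pr_rec_gen k f g (F : nat -> list nat -> nat) :
  is_prim_rec k f -> is_prim_rec (S (S k)) g ->
  (forall w, length w = k -> F 0 w = f w) ->
  (forall n w, length w = k -> F (S n) w = g (n :: F n w :: w)) ->
  is_prim_rec (S k) (fun v => F (hd 0 v) (tl v)).
Proof.
  intros Hf Hg H0 HS.
  eapply PR_ext. apply (PR_rec k f g Hf Hg).
  intros [|n w] Hl; simpl in Hl; [discriminate|]. injection Hl as Hl.
  simpl. induction n; simpl.
  - rewrite H0; auto.
  - rewrite HS by auto. rewrite IHn. reflexivity.
Qed.

Lemma pr_rec1 (h : nat -> nat) c G : pr2 G -> h 0 = c ->
  (forall n, h (S n) = G n (h n)) -> pr1 h.
Proof.
  intros HG H0 HS.
  eapply PR_ext.
  apply (pr_rec_gen 0 (fun _ => c) (fun v => G (nth 0 v 0) (nth 1 v 0)) (fun n _ => h n)).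
  - apply pr_const.
  - exact HG.
  - intros; auto.
  - intros; simpl; auto.
  - intros [|x v] _; reflexivity.
Qed.

Lemma pr_rec2 (h : nat -> nat -> nat) a G : pr1 a -> pr3 G ->
  (forall y, h 0 y = a y) ->
  (forall n y, h (S n) y = G n (h n y) y) -> pr2 h.
Proof.
  intros Ha HG H0 HS.
  eapply PR_ext.
  apply (pr_rec_gen 1 (fun v => a (nth 0 v 0))
          (fun v => G (nth 0 v 0) (nth 1 v 0) (nth 2 v 0)) (fun n w => h n (nth 0 w 0))).
  - exact Ha.
  - exact HG.
  - intros; auto.
  - intros n w _; simpl; auto.
  - intros [|x v] _; reflexivity.
Qed.

Ltac prove_pr :=
  repeat match goal with
  | |- is_prim_rec _ (fun _ => ?c) => apply pr_const
  | |- is_prim_rec _ (fun v => nth _ v 0) => apply pr_proj; lia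
  | |- is_prim_rec _ (fun v => ?f _ _ _) => eapply pr_c3; [solve [eauto with prdb]| | |]
  | |- is_prim_rec _ (fun v => ?f _ _) => eapply pr_c2; [solve [eauto with prdb]| |]
  | |- is_prim_rec _ (fun v => ?f _) => eapply pr_c1; [solve [eauto with prdb]|]
  end.

#[export] Hint Resolve pr_S : prdb.

Lemma pr_add : pr2 Nat.add.
Proof.
  eapply pr_rec2 with (a := fun y => y) (G := fun _ r _ => S r).
  - unfold pr1. prove_pr.
  - unfold pr3. prove_pr.
  - reflexivity.
  - reflexivity.
Qed.
#[export] Hint Resolve pr_add : prdb.

Lemma pr_mul : pr2 Nat.mul.
Proof.
  eapply pr_rec2 with (a := fun y => 0) (G := fun _ r y => y + r).
  - unfold pr1. prove_pr.
  - unfold pr3. prove_pr.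
  - reflexivity.
  - intros; simpl. lia.
Qed.
#[export] Hint Resolve pr_mul : prdb.

Lemma pr_pred : pr1 Nat.pred.
Proof.
  eapply pr_rec1 with (c := 0) (G := fun n _ => n).
  - unfold pr2. prove_pr.
  - reflexivity.
  - reflexivity.
Qed.
#[export] Hint Resolve pr_pred : prdb.

Lemma pr_subr : pr2 (fun y x => x - y).
Proof.
  eapply pr_rec2 with (a := fun y => y) (G := fun _ r _ => Nat.pred r).
  - unfold pr1. prove_pr.
  - unfold pr3. prove_pr.
  - intros; lia.
  - intros; simpl; lia.
Qed.

Lemma pr_sub : pr2 Nat.sub.
Proof.
  unfold pr2.
  exact (pr_c2 2 (fun y x => x - y) (fun v => nth 1 v 0) (fun v => nth 0 v 0) pr_subr
           (pr_proj 2 1 ltac:(lia)) (pr_proj 2 0 ltac:(lia))).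
Qed.
#[export] Hint Resolve pr_sub : prdb.

Definition ite (c a b : nat) := (1 - (1 - c)) * a + (1 - c) * b.
Lemma ite_0 a b : ite 0 a b = b. Proof. unfold ite; simpl; lia. Qed.
Lemma ite_S n a b : ite (S n) a b = a. Proof. unfold ite; simpl; lia. Qed.
Lemma pr_ite : pr3 ite.
Proof. unfold pr3, ite. prove_pr. Qed.
#[export] Hint Resolve pr_ite : prdb.

Definition eqn x y := 1 - ((x - y) + (y - x)).
Definition leb' x y := 1 - (x - y).
Lemma pr_eqn : pr2 eqn. Proof. unfold pr2, eqn. prove_pr. Qed.
Lemma pr_leb : pr2 leb'. Proof. unfold pr2, leb'. prove_pr. Qed.
#[export] Hint Resolve pr_eqn pr_leb : prdb.
Lemma eqn_t x y : x = y -> eqn x y = 1. Proof. unfold eqn; lia. Qed.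
Lemma eqn_f x y : x <> y -> eqn x y = 0. Proof. unfold eqn; lia. Qed.
Lemma leb_t x y : x <= y -> leb' x y = 1. Proof. unfold leb'; lia. Qed.
Lemma leb_f x y : y < x -> leb' x y = 0. Proof. unfold leb'; lia. Qed.

Open Scope nat_scope.

Fixpoint tri n := match n with 0 => 0 | S m => tri m + S m end.
Lemma pr_tri : pr1 tri.
Proof.
  eapply pr_rec1 with (c := 0) (G := fun n r => r + S n).
  - unfold pr2. prove_pr.
  - reflexivity.
  - reflexivity.
Qed.
#[export] Hint Resolve pr_tri : prdb.

Fixpoint troot z := match z with
  | 0 => 0
  | S y => ite (leb' (tri (S (troot y))) (S y)) (S (troot y)) (troot y) end.
Lemma pr_troot : pr1 troot.
Proof.
  eapply pr_rec1 with (c := 0) (G := fun n r => ite (leb' (tri (S r)) (S n)) (S r) r).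
  - unfold pr2. prove_pr.
  - reflexivity.
  - reflexivity.
Qed.
#[export] Hint Resolve pr_troot : prdb.

Lemma troot_spec z : tri (troot z) <= z < tri (S (troot z)).
Proof.
  induction z; simpl.
  - lia.
  - simpl in IHz.
    destruct (le_lt_dec (tri (troot z) + S (troot z)) (S z)).
    + rewrite leb_t by (simpl; lia). rewrite ite_S. simpl. lia.
    + rewrite leb_f by (simpl; lia). rewrite ite_0. lia.
Qed.

Lemma tri_mono a b : a < b -> tri (S a) <= tri b.
Proof.
  induction 1; simpl; [lia|]. simpl in IHle. lia.
Qed.

Lemma troot_unique a z : tri a <= z < tri (S a) -> troot z = a.
Proof.
  intros [H1 H2]. pose proof (troot_spec z) as [H3 H4].
  destruct (lt_eq_lt_dec (troot z) a) as [[Hl|He]|Hl]; auto.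
  - apply tri_mono in Hl. lia.
  - apply tri_mono in Hl. lia.
Qed.

Definition pair x y := tri (x + y) + y.
Definition psnd z := z - tri (troot z).
Definition pfst z := troot z - psnd z.

Lemma pr_pair : pr2 pair. Proof. unfold pr2, pair. prove_pr. Qed.
Lemma pr_psnd : pr1 psnd. Proof. unfold pr1, psnd. prove_pr. Qed.
Lemma pr_pfst : pr1 pfst. Proof. unfold pr1, pfst, psnd. prove_pr. Qed.
#[export] Hint Resolve pr_pair pr_pfst pr_psnd : prdb.

Lemma troot_pair x y : troot (pair x y) = x + y.
Proof. apply troot_unique. unfold pair. simpl. lia. Qed.
Lemma psnd_pair x y : psnd (pair x y) = y.
Proof. unfold psnd. rewrite troot_pair. unfold pair. lia. Qed.
Lemma pfst_pair x y : pfst (pair x y) = x.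
Proof. unfold pfst. rewrite psnd_pair, troot_pair. lia. Qed.

Lemma tri_ge n : n <= tri n. Proof. induction n; simpl; lia. Qed.
Lemma psnd_le z : psnd z <= z. Proof. unfold psnd. lia. Qed.
Lemma pfst_le z : pfst z <= z.
Proof. unfold pfst. pose proof (troot_spec z). pose proof (tri_ge (troot z)). lia. Qed.
Lemma pfst_0 : pfst 0 = 0. Proof. reflexivity. Qed.
Lemma psnd_0 : psnd 0 = 0. Proof. reflexivity. Qed.

Definition ncons a l := S (pair a l).
Definition nhd l := pfst (Nat.pred l).
Definition ntl l := psnd (Nat.pred l).
Lemma pr_ncons : pr2 ncons. Proof. unfold pr2, ncons. prove_pr. Qed.
Lemma pr_nhd : pr1 nhd. Proof. unfold pr1, nhd. prove_pr. Qed.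
Lemma pr_ntl : pr1 ntl. Proof. unfold pr1, ntl. prove_pr. Qed.
#[export] Hint Resolve pr_ncons pr_nhd pr_ntl : prdb.
Lemma nhd_cons a l : nhd (ncons a l) = a. Proof. unfold nhd, ncons; simpl. apply pfst_pair. Qed.
Lemma ntl_cons a l : ntl (ncons a l) = l. Proof. unfold ntl, ncons; simpl. apply psnd_pair. Qed.

Fixpoint enc (l : list nat) : nat := match l with [] => 0 | a :: t => ncons a (enc t) end.
Lemma nhd_enc l : nhd (enc l) = hd 0 l.
Proof. destruct l; simpl; [reflexivity|apply nhd_cons]. Qed.
Lemma ntl_enc l : ntl (enc l) = enc (tl l).
Proof. destruct l; simpl; [reflexivity|apply ntl_cons]. Qed.

Fixpoint tlit x l := match x with 0 => l | S y => ntl (tlit y l) end.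
Lemma pr_tlit : pr2 tlit.
Proof.
  eapply pr_rec2 with (a := fun y => y) (G := fun _ r _ => ntl r).
  - unfold pr1. prove_pr.
  - unfold pr3. prove_pr.
  - reflexivity.
  - reflexivity.
Qed.
#[export] Hint Resolve pr_tlit : prdb.
Definition nnth x l := nhd (tlit x l).
Lemma pr_nnth : pr2 nnth. Proof. unfold pr2, nnth. prove_pr. Qed.
#[export] Hint Resolve pr_nnth : prdb.



Lemma tlit_S x l : tlit (S x) l = tlit x (ntl l).
Proof. induction x; simpl; auto; simpl in IHx; rewrite IHx; reflexivity. Qed.

Lemma nnth_enc x l : nnth x (enc l) = nth x l 0.
Proof.
  unfold nnth. induction x in l |- *.
  - simpl. rewrite nhd_enc. destruct l; reflexivity.
  - rewrite tlit_S, ntl_enc. rewrite IHx. destruct l; simpl; auto; destruct x; reflexivity.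
Qed.

Open Scope nat_scope.

Definition fEv e v := pair 0 (pair e v).
Definition fArgs hl v := pair 1 (pair hl v).
Definition fCons := pair 2 0.
Definition fApp g := pair 3 g.
Definition fRec g w m n := pair 4 (pair g (pair w (pair m n))).

Definition step (st : nat) : nat :=
  let ctl := pfst st in let S0 := psnd st in
  let fr := nhd ctl in let K := ntl ctl in
  let tag := pfst fr in let dat := psnd fr in
  ite ctl
  (ite (eqn tag 0)
    (let e := pfst dat in let v := psnd dat in
     ite e (let a := Nat.pred e in let t := pfst a in let x := psnd a in
       ite (eqn t 0) (pair K (ncons (S (nhd v)) S0))
       (ite (eqn t 1) (pair K (ncons (nnth x v) S0))
       (ite (eqn t 2) (pair (ncons (fArgs (psnd x) v) (ncons (fApp (pfst x)) K)) S0)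
         (pair (ncons (fEv (pfst x) (ntl v)) (ncons (fRec (psnd x) (ntl v) 0 (nhd v)) K)) S0))))
     (pair K (ncons 0 S0)))
  (ite (eqn tag 1)
    (let hl := pfst dat in let v := psnd dat in
     ite hl (pair (ncons (fEv (nhd hl) v) (ncons (fArgs (ntl hl) v) (ncons fCons K))) S0)
            (pair K (ncons 0 S0)))
  (ite (eqn tag 2) (pair K (ncons (ncons (nhd (ntl S0)) (nhd S0)) (ntl (ntl S0))))
  (ite (eqn tag 3) (pair (ncons (fEv dat (nhd S0)) K) (ntl S0))
    (let g := pfst dat in let w := pfst (psnd dat) in
     let m := pfst (psnd (psnd dat)) in let n := psnd (psnd (psnd dat)) in
     ite (eqn m n) (pair K S0)
       (pair (ncons (fEv g (ncons m (ncons (nhd S0) w))) (ncons (fRec g w (S m) n) K)) (ntl S0)))))))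
  st.

Lemma pr_step : pr1 step.
Proof.
  unfold pr1, step, fEv, fArgs, fCons, fApp, fRec. cbv beta zeta. prove_pr.
Qed.
#[export] Hint Resolve pr_step : prdb.

Fixpoint run t st := match t with 0 => st | S u => step (run u st) end.
Lemma pr_run : pr2 run.
Proof.
  eapply pr_rec2 with (a := fun y => y) (G := fun _ r _ => step r).
  - unfold pr1. prove_pr.
  - unfold pr3. prove_pr.
  - reflexivity.
  - reflexivity.
Qed.
#[export] Hint Resolve pr_run : prdb.

Lemma run_add a b st : run (a + b) st = run b (run a st).
Proof. induction b; simpl; [rewrite Nat.add_0_r; auto|]. rewrite Nat.add_succ_r; simpl; congruence. Qed.

Lemma nhd_S a l : nhd (S (pair a l)) = a. Proof. apply nhd_cons. Qed.
Lemma ntl_S a l : ntl (S (pair a l)) = l. Proof. apply ntl_cons. Qed.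
Ltac pairs := repeat progress (rewrite ?pfst_pair, ?psnd_pair, ?nhd_S, ?ntl_S).

Lemma step_halt S0 : step (pair 0 S0) = pair 0 S0.
Proof. unfold step. cbv zeta. pairs. apply ite_0. Qed.

Ltac stepc := unfold step, fEv, fArgs, fCons, fApp, fRec, ncons; cbv zeta; pairs;
  simpl Nat.pred;
  repeat first [rewrite eqn_t by lia | rewrite eqn_f by lia | rewrite ite_S | rewrite ite_0 | pairs].

Lemma step_ev0 v K S0 : step (pair (ncons (fEv 0 v) K) S0) = pair K (ncons 0 S0).
Proof. stepc. reflexivity. Qed.
Lemma step_evS x v K S0 : step (pair (ncons (fEv (S (pair 0 x)) v) K) S0) = pair K (ncons (S (nhd v)) S0).
Proof. stepc. reflexivity. Qed.
Lemma step_evP x v K S0 : step (pair (ncons (fEv (S (pair 1 x)) v) K) S0) = pair K (ncons (nnth x v) S0).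
Proof. stepc. reflexivity. Qed.
Lemma step_evC x v K S0 : step (pair (ncons (fEv (S (pair 2 x)) v) K) S0) =
   pair (ncons (fArgs (psnd x) v) (ncons (fApp (pfst x)) K)) S0.
Proof. stepc. reflexivity. Qed.
Lemma step_evR t x v K S0 : 3 <= t -> step (pair (ncons (fEv (S (pair t x)) v) K) S0) =
   pair (ncons (fEv (pfst x) (ntl v)) (ncons (fRec (psnd x) (ntl v) 0 (nhd v)) K)) S0.
Proof. intros. stepc. reflexivity. Qed.
Lemma step_args0 v K S0 : step (pair (ncons (fArgs 0 v) K) S0) = pair K (ncons 0 S0).
Proof. stepc. reflexivity. Qed.
Lemma step_argsS a v K S0 : step (pair (ncons (fArgs (S a) v) K) S0) =
  pair (ncons (fEv (pfst a) v) (ncons (fArgs (psnd a) v) (ncons fCons K))) S0.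
Proof. stepc. unfold nhd, ntl. simpl Nat.pred. reflexivity. Qed.
Lemma step_cons r l K S0 : step (pair (ncons fCons K) (ncons l (ncons r S0))) =
  pair K (ncons (ncons r l) S0).
Proof. stepc. reflexivity. Qed.
Lemma step_app g l K S0 : step (pair (ncons (fApp g) K) (ncons l S0)) = pair (ncons (fEv g l) K) S0.
Proof. stepc. reflexivity. Qed.
Lemma step_rec_done g w n r K S0 : step (pair (ncons (fRec g w n n) K) (ncons r S0)) =
  pair K (ncons r S0).
Proof. stepc. reflexivity. Qed.
Lemma step_rec g w m n r K S0 : m <> n -> step (pair (ncons (fRec g w m n) K) (ncons r S0)) =
  pair (ncons (fEv g (ncons m (ncons r w))) (ncons (fRec g w (S m) n) K)) S0.
Proof. intros. stepc. reflexivity. Qed.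

Open Scope nat_scope.

Inductive Eval : nat -> list nat -> nat -> Prop :=
| EZ v : Eval 0 v 0
| ES x v : Eval (S (pair 0 x)) v (S (hd 0 v))
| EP x v : Eval (S (pair 1 x)) v (nth x v 0)
| EC x v rs r : EvalL (psnd x) v rs -> Eval (pfst x) rs r -> Eval (S (pair 2 x)) v r
| ER t x v r : 3 <= t -> EvalR (pfst x) (psnd x) (tl v) (hd 0 v) r -> Eval (S (pair t x)) v r
with EvalL : nat -> list nat -> list nat -> Prop :=
| EL0 v : EvalL 0 v []
| ELS a v r rs : Eval (pfst a) v r -> EvalL (psnd a) v rs -> EvalL (S a) v (r :: rs)
with EvalR : nat -> nat -> list nat -> nat -> nat -> Prop :=
| ER0 f g w r : Eval f w r -> EvalR f g w 0 r
| ERS f g w n r r' : EvalR f g w n r -> Eval g (n :: r :: w) r' -> EvalR f g w (S n) r'.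

Scheme Eval_ind' := Induction for Eval Sort Prop
with EvalL_ind' := Induction for EvalL Sort Prop
with EvalR_ind' := Induction for EvalR Sort Prop.
Combined Scheme Eval_mut from Eval_ind', EvalL_ind', EvalR_ind'.

Definition reach a b := exists n, run n a = b.
Lemma reach_trans a b c : reach a b -> reach b c -> reach a c.
Proof. intros [n Hn] [m Hm]. exists (n + m). rewrite run_add, Hn; auto. Qed.
Lemma reach_step a b : step a = b -> reach a b.
Proof. intros H. exists 1. simpl. auto. Qed.
Lemma reach_refl a : reach a a.
Proof. exists 0; reflexivity. Qed.

Lemma machine_ok :
  (forall e v r, Eval e v r -> forall K S0,
     reach (pair (ncons (fEv e (enc v)) K) S0) (pair K (ncons r S0))) /\
  (forall hl v rs, EvalL hl v rs -> forall K S0,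
     reach (pair (ncons (fArgs hl (enc v)) K) S0) (pair K (ncons (enc rs) S0))) /\
  (forall f g w n r, EvalR f g w n r -> forall N K S0, n <= N ->
     reach (pair (ncons (fEv f (enc w)) (ncons (fRec g (enc w) 0 N) K)) S0)
           (pair (ncons (fRec g (enc w) n N) K) (ncons r S0))).
Proof.
  apply (Eval_mut
    (fun e v r _ => forall K S0,
       reach (pair (ncons (fEv e (enc v)) K) S0) (pair K (ncons r S0)))
    (fun hl v rs _ => forall K S0,
       reach (pair (ncons (fArgs hl (enc v)) K) S0) (pair K (ncons (enc rs) S0)))
    (fun f g w n r _ => forall N K S0, n <= N ->
       reach (pair (ncons (fEv f (enc w)) (ncons (fRec g (enc w) 0 N) K)) S0)
             (pair (ncons (fRec g (enc w) n N) K) (ncons r S0)))).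
  - intros. apply reach_step, step_ev0.
  - intros. apply reach_step. rewrite step_evS, nhd_enc. reflexivity.
  - intros. apply reach_step. rewrite step_evP, nnth_enc. reflexivity.
  - intros x v rs r HL IHL HE IHE K S0.
    eapply reach_trans. apply reach_step, step_evC.
    eapply reach_trans. apply IHL.
    eapply reach_trans. apply reach_step, step_app.
    apply IHE.
  - intros t x v r Ht HR IHR K S0.
    eapply reach_trans. apply reach_step, step_evR, Ht.
    rewrite ntl_enc, nhd_enc.
    eapply reach_trans. apply IHR. lia.
    apply reach_step, step_rec_done.
  - intros. apply reach_step, step_args0.
  - intros a v r rs HE IHE HL IHL K S0.
    eapply reach_trans. apply reach_step, step_argsS.
    eapply reach_trans. apply IHE.
    eapply reach_trans. apply IHL.
    apply reach_step. simpl. apply step_cons.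
  - intros f g w r HE IHE N K S0 _. apply IHE.
  - intros f g w n r r' HR IHR HE IHE N K S0 Hn.
    eapply reach_trans. apply IHR. lia.
    eapply reach_trans. apply reach_step, step_rec. lia.
    change (ncons n (ncons r (enc w))) with (enc (n :: r :: w)).
    apply IHE.
Qed.

Lemma pair_surj a : pair (pfst a) (psnd a) = a.
Proof.
  pose proof (troot_spec a) as [H1 H2]. simpl in H2.
  unfold pfst, psnd, pair.
  replace (troot a - (a - tri (troot a)) + (a - tri (troot a))) with (troot a) by lia.
  lia.
Qed.

Lemma evall_total E : (forall e', e' < E -> forall v, exists r, Eval e' v r) ->
  forall hl, hl < E -> forall v, exists rs, EvalL hl v rs.
Proof.
  intros IH hl. induction hl as [hl IHh] using lt_wf_ind. intros Hl v.
  destruct hl as [|b]. { exists []; constructor. }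
  pose proof (pfst_le b). pose proof (psnd_le b).
  destruct (IH (pfst b) ltac:(lia) v) as [r Hr].
  destruct (IHh (psnd b) ltac:(lia) ltac:(lia) v) as [rs Hrs].
  exists (r :: rs). constructor; auto.
Qed.

Lemma eval_total : forall e v, exists r, Eval e v r.
Proof.
  intro e. induction e as [e IH] using lt_wf_ind. intro v.
  destruct e as [|a]. { exists 0; constructor. }
  rewrite <- (pair_surj a) in IH |- *.
  remember (pfst a) as t. remember (psnd a) as x.
  assert (Hx : x < S (pair t x)) by (rewrite Heqt, Heqx, pair_surj; subst; pose proof (psnd_le a); lia).
  pose proof (pfst_le x). pose proof (psnd_le x).
  destruct t as [|[|[|t]]].
  - eexists; constructor.
  - eexists; constructor.
  - destruct (evall_total _ IH (psnd x) ltac:(lia) v) as [rs Hrs].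
    destruct (IH (pfst x) ltac:(lia) rs) as [r Hr].
    exists r. econstructor; eauto.
  - assert (forall n, exists r, EvalR (pfst x) (psnd x) (tl v) n r).
    { induction n.
      - destruct (IH (pfst x) ltac:(lia) (tl v)) as [r Hr]. exists r; constructor; auto.
      - destruct IHn as [r Hr].
        destruct (IH (psnd x) ltac:(lia) (n :: r :: tl v)) as [r' Hr'].
        exists r'. econstructor; eauto. }
    destruct (H1 (hd 0 v)) as [r Hr]. exists r. constructor; auto. lia.
Qed.

(* PR functions have codes *)
Lemma list_choice (P : nat -> nat -> Prop) m :
  (forall i, i < m -> exists e, P i e) ->
  exists l, length l = m /\ forall i, i < m -> P i (nth i l 0).
Proof.
  induction m; intros H.
  - exists []; split; auto. intros; lia.
  - assert (Hm : forall i, i < m -> exists e, P i e) by (intros; apply H; lia).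
    destruct (IHm Hm) as [l [Hl Hp]].
    destruct (H m ltac:(lia)) as [e He].
    exists (l ++ [e]). split. { rewrite length_app; simpl; lia. }
    intros i Hi. destruct (Nat.eq_dec i m).
    + subst i. rewrite app_nth2 by lia. rewrite Hl, Nat.sub_diag. exact He.
    + rewrite app_nth1 by lia. apply Hp; lia.
Qed.

Lemma evalL_map (hs : nat -> list nat -> nat) v : forall l off,
  (forall i, i < length l -> Eval (nth i l 0) v (hs (off + i) v)) ->
  EvalL (enc l) v (map (fun i => hs i v) (seq off (length l))).
Proof.
  induction l as [|e l IHl]; intros off H; simpl.
  - constructor.
  - unfold ncons. constructor.
    + rewrite pfst_pair. specialize (H 0 ltac:(simpl; lia)). simpl in H. rewrite Nat.add_0_r in H. exact H.
    + rewrite psnd_pair. apply IHl. intros i Hi. replace (S off + i) with (off + S i) by lia.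
      apply (H (S i)). simpl; lia.
Qed.

Lemma pr_has_code k f : is_prim_rec k f ->
  exists e, forall v, length v = k -> Eval e v (f v).
Proof.
  induction 1.
  - exists 0. intros; constructor.
  - exists (S (pair 0 0)). intros; constructor.
  - exists (S (pair 1 i)). intros; constructor.
  - destruct IHis_prim_rec as [eg Hg].
    destruct (list_choice (fun i e => forall v, length v = k -> Eval e v (hs i v)) m) as [l [Hl Hp]].
    { intros i Hi. apply H1; auto. }
    exists (S (pair 2 (pair eg (enc l)))). intros v Hv.
    econstructor.
    + rewrite psnd_pair. rewrite <- Hl. apply (evalL_map hs v l 0). intros i Hi. apply (Hp i); auto; lia.
    + rewrite pfst_pair, Hl. apply Hg. rewrite length_map, length_seq. auto.
  - destruct IHis_prim_rec1 as [ef Hf]. destruct IHis_prim_rec2 as [eg Hg].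
    exists (S (pair 3 (pair ef eg))). intros v Hv.
    destruct v as [|n w]; simpl in Hv; [discriminate|]. injection Hv as Hv.
    apply ER; [lia|]. rewrite pfst_pair, psnd_pair. simpl.
    induction n; simpl.
    + constructor. apply Hf; auto.
    + econstructor. apply IHn. apply Hg. simpl; auto.
  - destruct IHis_prim_rec as [e He]. exists e. intros v Hv. rewrite <- H0 by auto. auto.
Qed.

Open Scope nat_scope.

Definition init e p := pair (ncons (fEv e (ncons p 0)) 0) 0.
Definition doneb e p t := 1 - pfst (run t (init e p)).
Definition outv e p t := nhd (psnd (run t (init e p))).
Definition firstb e p t := doneb e p t * (1 - doneb e p (Nat.pred t)).

Lemma pr_doneb : pr3 doneb.
Proof. unfold pr3, doneb, init, fEv. prove_pr. Qed.
Lemma pr_outv : pr3 outv.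
Proof. unfold pr3, outv, init, fEv. prove_pr. Qed.
#[export] Hint Resolve pr_doneb pr_outv : prdb.
Lemma pr_firstb : pr3 firstb.
Proof. unfold pr3, firstb. prove_pr. Qed.
#[export] Hint Resolve pr_firstb : prdb.

Definition Gstep i st :=
  ite (leb' (psnd st + 2) i * firstb (pfst st) (psnd st) (i - psnd st - 2))
      (pair (S (pfst st)) (S i)) st.
Fixpoint Gf i := match i with 0 => pair 0 1 | S i' => Gstep i' (Gf i') end.
Lemma pr_Gf : pr1 Gf.
Proof.
  eapply pr_rec1 with (c := pair 0 1) (G := Gstep).
  - unfold pr2, Gstep. prove_pr.
  - reflexivity.
  - reflexivity.
Qed.
#[export] Hint Resolve pr_Gf : prdb.

Definition sPg i st :=
  ite (eqn i (psnd st)) 2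
   (ite (leb' (S (psnd st)) i * firstb (pfst st) (psnd st) (i - psnd st - 1))
      (ite (eqn (outv (pfst st) (psnd st) (i - psnd st - 1)) 1) 0 2) 1).
Definition sP i := sPg i (Gf i).
Lemma pr_sP : pr1 sP.
Proof. unfold pr1, sP, sPg. prove_pr. Qed.

Lemma ite_cases c a b : ite c a b = a \/ ite c a b = b.
Proof. destruct c; [rewrite ite_0|rewrite ite_S]; auto. Qed.
Lemma sP_le i : sP i <= 2.
Proof.
  unfold sP, sPg.
  destruct (ite_cases (eqn i (psnd (Gf i))) 2 (ite (leb' (S (psnd (Gf i))) i * firstb (pfst (Gf i)) (psnd (Gf i)) (i - psnd (Gf i) - 1))
      (ite (eqn (outv (pfst (Gf i)) (psnd (Gf i)) (i - psnd (Gf i) - 1)) 1) 0 2) 1)) as [H|H];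
  rewrite H; [lia|].
  destruct (ite_cases (leb' (S (psnd (Gf i))) i * firstb (pfst (Gf i)) (psnd (Gf i)) (i - psnd (Gf i) - 1))
      (ite (eqn (outv (pfst (Gf i)) (psnd (Gf i)) (i - psnd (Gf i) - 1)) 1) 0 2) 1) as [H2|H2];
  rewrite H2; [|lia].
  destruct (ite_cases (eqn (outv (pfst (Gf i)) (psnd (Gf i)) (i - psnd (Gf i) - 1)) 1) 0 2) as [H3|H3];
  rewrite H3; lia.
Qed.

Lemma run_halted t S0 : run t (pair 0 S0) = pair 0 S0.
Proof. induction t; simpl; auto. rewrite IHt. apply step_halt. Qed.

Lemma init_reach e p r : Eval e [p] r -> reach (init e p) (pair 0 (ncons r 0)).
Proof. intros H. apply (proj1 machine_ok _ _ _ H 0 0). Qed.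

Lemma doneb_01 e p t : doneb e p t = 0 \/ doneb e p t = 1.
Proof. unfold doneb. lia. Qed.
Lemma doneb_0 e p : doneb e p 0 = 0.
Proof. unfold doneb, init, ncons. simpl. rewrite pfst_pair. lia. Qed.

Lemma doneb_halted e p t : doneb e p t = 1 -> run t (init e p) = pair 0 (psnd (run t (init e p))).
Proof.
  unfold doneb. intros H. transitivity (pair (pfst (run t (init e p))) (psnd (run t (init e p)))).
  symmetry; apply pair_surj. f_equal. lia.
Qed.

Lemma doneb_mono e p t d : doneb e p t = 1 -> doneb e p (d + t) = 1.
Proof.
  intros H. pose proof (doneb_halted _ _ _ H) as Hh.
  unfold doneb. rewrite Nat.add_comm, run_add, Hh, run_halted, pfst_pair. lia.
Qed.

Lemma doneb_exists e p : exists t, doneb e p t = 1.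
Proof.
  destruct (eval_total e [p]) as [r Hr].
  destruct (init_reach _ _ _ Hr) as [n Hn]. exists n. unfold doneb. rewrite Hn, pfst_pair. lia.
Qed.

Lemma outv_correct e p r t : Eval e [p] r -> doneb e p t = 1 -> outv e p t = r.
Proof.
  intros Hr Ht. destruct (init_reach _ _ _ Hr) as [n Hn].
  assert (run t (init e p) = pair 0 (ncons r 0)).
  { destruct (le_lt_dec n t).
    - replace t with (n + (t - n)) by lia. rewrite run_add, Hn, run_halted. auto.
    - pose proof (doneb_halted _ _ _ Ht) as Hh.
      replace n with (t + (n - t)) in Hn by lia. rewrite run_add, Hh, run_halted in Hn.
      rewrite Hh. auto. }
  unfold outv. rewrite H, psnd_pair. apply nhd_cons.
Qed.

Lemma firstb_iff e p t : firstb e p t = 1 <-> (doneb e p t = 1 /\ doneb e p (Nat.pred t) = 0).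
Proof.
  unfold firstb. destruct (doneb_01 e p t) as [H|H]; rewrite H;
  destruct (doneb_01 e p (Nat.pred t)) as [H2|H2]; rewrite H2; lia.
Qed.
Lemma firstb_01 e p t : firstb e p t = 0 \/ firstb e p t = 1.
Proof.
  unfold firstb. destruct (doneb_01 e p t) as [H|H]; rewrite H;
  destruct (doneb_01 e p (Nat.pred t)) as [H2|H2]; rewrite H2; lia.
Qed.

Lemma first_exists e p : exists t, firstb e p t = 1.
Proof.
  destruct (doneb_exists e p) as [t Ht].
  induction t.
  - rewrite doneb_0 in Ht. discriminate.
  - destruct (doneb_01 e p t) as [H|H].
    + exists (S t). apply firstb_iff. simpl. auto.
    + auto.
Qed.

Lemma first_unique e p t1 t2 : firstb e p t1 = 1 -> firstb e p t2 = 1 -> t1 = t2.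
Proof.
  rewrite !firstb_iff. intros [A1 B1] [A2 B2].
  destruct (lt_eq_lt_dec t1 t2) as [[H|H]|H]; auto.
  - pose proof (doneb_mono e p t1 (Nat.pred t2 - t1) A1).
    replace (Nat.pred t2 - t1 + t1) with (Nat.pred t2) in H0 by lia. lia.
  - pose proof (doneb_mono e p t2 (Nat.pred t1 - t2) A2).
    replace (Nat.pred t1 - t2 + t2) with (Nat.pred t1) in H0 by lia. lia.
Qed.

Definition Hm e p : nat :=
  proj1_sig (constructive_indefinite_ground_description_nat (fun t => firstb e p t = 1)
    (fun t => Nat.eq_dec (firstb e p t) 1) (first_exists e p)).
Lemma Hm_spec e p : firstb e p (Hm e p) = 1.
Proof. unfold Hm. destruct constructive_indefinite_ground_description_nat; auto. Qed.
Lemma Hm_pos e p : 1 <= Hm e p.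
Proof.
  pose proof (Hm_spec e p). destruct (Hm e p); [|lia].
  apply firstb_iff in H. rewrite doneb_0 in H. lia.
Qed.
Lemma Hm_done e p : doneb e p (Hm e p) = 1.
Proof. apply (proj1 (firstb_iff _ _ _) (Hm_spec e p)). Qed.
Lemma firstb_other e p t : t <> Hm e p -> firstb e p t = 0.
Proof.
  intros H. destruct (firstb_01 e p t) as [|H1]; auto.
  exfalso. apply H. apply (first_unique e p); auto. apply Hm_spec.
Qed.

Fixpoint pos j := match j with 0 => 1 | S j' => pos j' + Hm j' (pos j') + 3 end.

Lemma pos_mono j j' : j < j' -> pos (S j) <= pos j'.
Proof. induction 1; simpl; [lia|]. simpl in IHle. lia. Qed.
Lemma pos_ge1 j : 1 <= pos j. Proof. induction j; simpl; lia. Qed.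

Lemma Gf_char i : exists j, Gf i = pair j (pos j) /\ i < pos (S j) /\ (i < pos j -> j = 0).
Proof.
  induction i.
  - exists 0. simpl. split; [reflexivity|]. lia.
  - destruct IHi as [j [HG [Hi Hj]]]. simpl. rewrite HG. unfold Gstep. rewrite pfst_pair, psnd_pair.
    pose proof (Hm_pos j (pos j)).
    destruct (Nat.eq_dec i (pos j + Hm j (pos j) + 2)) as [E|E].
    + rewrite leb_t by lia. replace (i - pos j - 2) with (Hm j (pos j)) by lia.
      rewrite Hm_spec. change (1*1) with 1. rewrite ite_S. exists (S j). split. { f_equal. simpl. lia. }
      simpl. simpl in Hi. lia.
    + simpl in Hi.
      replace (leb' (pos j + 2) i * firstb j (pos j) (i - pos j - 2)) with 0.
      * rewrite ite_0. exists j. split; auto. simpl. split; [lia|]. intros; apply Hj; lia.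
      * destruct (le_lt_dec (pos j + 2) i).
        -- rewrite firstb_other by lia. lia.
        -- rewrite leb_f by lia. lia.
Qed.

Lemma Gf_block j i : pos j <= i < pos (S j) -> Gf i = pair j (pos j).
Proof.
  intros Hi. destruct (Gf_char i) as [j' [HG [Hi' Hj']]].
  assert (j' = j).
  { destruct (le_lt_dec (pos j') i).
    - destruct (lt_eq_lt_dec j j') as [[H|H]|H]; auto.
      + pose proof (pos_mono _ _ H). lia.
      + pose proof (pos_mono _ _ H). lia.
    - specialize (Hj' l). subst. simpl in l. pose proof (pos_ge1 j). lia. }
  subst; auto.
Qed.

Definition sigma j := ite (eqn (outv j (pos j) (Hm j (pos j))) 1) 0 2.

Lemma sP_p j : sP (pos j) = 2.
Proof.
  unfold sP. rewrite (Gf_block j) by (simpl; lia). unfold sPg. rewrite psnd_pair, eqn_t by auto.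
  apply ite_S.
Qed.
Lemma sP_c j : sP (pos j + 1 + Hm j (pos j)) = sigma j.
Proof.
  unfold sP. rewrite (Gf_block j) by (simpl; lia). unfold sPg. rewrite pfst_pair, psnd_pair, eqn_f by lia.
  rewrite ite_0, leb_t by lia. replace (pos j + 1 + Hm j (pos j) - pos j - 1) with (Hm j (pos j)) by lia.
  rewrite Hm_spec. simpl. rewrite ite_S. reflexivity.
Qed.
Lemma sP_zero j i : pos j < i < pos (S j) -> i <> pos j + 1 + Hm j (pos j) -> sP i = 1.
Proof.
  intros Hi Hne. unfold sP. rewrite (Gf_block j) by lia. unfold sPg. rewrite pfst_pair, psnd_pair, eqn_f by lia.
  rewrite ite_0, leb_t by lia. rewrite firstb_other by lia. simpl. apply ite_0.
Qed.

Open Scope nat_scope.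

Fixpoint Zs (d : nat -> Z) (n : nat) : Z :=
  match n with 0 => 0%Z | S m => (2 * Zs d m + d (S m))%Z end.

Open Scope R_scope.

Lemma IZR_pow2 n : IZR (2 ^ Z.of_nat n) = 2 ^ n.
Proof. rewrite <- pow_IZR. reflexivity. Qed.

Lemma pow2_pos n : 0 < 2 ^ n.
Proof. apply pow_lt; lra. Qed.

Lemma sum_Zs d n : sum_f_R0 (fun n => IZR (d (S n)) / 2 ^ (S n)) n = IZR (Zs d (S n)) / 2 ^ (S n).
Proof.
  induction n.
  - simpl. try (f_equal; f_equal; ring).
  - rewrite tech5, IHn. change (Zs d (S (S n))) with (2 * Zs d (S n) + d (S (S n)))%Z. rewrite plus_IZR, mult_IZR.
    pose proof (pow2_pos n). simpl. field. lra.
Qed.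

Lemma Zs_split d m k : Zs d (m + k) = (2 ^ Z.of_nat k * Zs d m + Zs (fun i => d (m + i)%nat) k)%Z.
Proof.
  induction k.
  - rewrite Nat.add_0_r. change (Zs (fun i => d (m+i)%nat) 0) with 0%Z. change (Z.of_nat 0) with 0%Z. rewrite Z.pow_0_r. ring.
  - rewrite Nat.add_succ_r. change (Zs d (S (m + k))) with (2 * Zs d (m+k) + d (S (m+k)))%Z.
    change (Zs (fun i => d (m + i)%nat) (S k)) with (2 * Zs (fun i => d (m + i)%nat) k + d (m + S k)%nat)%Z.
    rewrite IHk. rewrite Nat2Z.inj_succ, Z.pow_succ_r by lia. rewrite <- Nat.add_succ_r. ring.
Qed.

Lemma Zs_bits d k : (forall i, (1 <= i)%nat -> (0 <= d i <= 1)%Z) ->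
  (0 <= Zs d k <= 2 ^ Z.of_nat k - 1)%Z.
Proof.
  intros H. induction k; [simpl; lia|].
  change (Zs d (S k)) with (2 * Zs d k + d (S k))%Z.
  rewrite Nat2Z.inj_succ, Z.pow_succ_r by lia. specialize (H (S k) ltac:(lia)). lia.
Qed.

Lemma Zs_signed d k : (forall i, (1 <= i)%nat -> (-1 <= d i <= 1)%Z) ->
  (- (2 ^ Z.of_nat k - 1) <= Zs d k <= 2 ^ Z.of_nat k - 1)%Z.
Proof.
  intros H. induction k; [simpl; lia|].
  change (Zs d (S k)) with (2 * Zs d k + d (S k))%Z.
  rewrite Nat2Z.inj_succ, Z.pow_succ_r by lia. specialize (H (S k) ltac:(lia)). lia.
Qed.

Lemma Zs_zeros d k : (forall i, (1 <= i <= k)%nat -> d i = 0%Z) -> Zs d k = 0%Z.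
Proof.
  induction k; intros H; simpl; auto. rewrite IHk by (intros; apply H; lia). rewrite H by lia. ring.
Qed.

Lemma lim_bounds u L lo hi N : Un_cv u L -> (forall n, (n >= N)%nat -> lo <= u n <= hi) -> lo <= L <= hi.
Proof.
  intros Hc Hb. split.
  - destruct (Rle_or_lt lo L); auto.
    destruct (Hc (lo - L)) as [N' HN']; [lra|].
    specialize (HN' (max N N') ltac:(lia)). specialize (Hb (max N N') ltac:(lia)).
    unfold Rdist in HN'. apply Rabs_def2 in HN'. lra.
  - destruct (Rle_or_lt L hi); auto.
    destruct (Hc (L - hi)) as [N' HN']; [lra|].
    specialize (HN' (max N N') ltac:(lia)). specialize (Hb (max N N') ltac:(lia)).
    unfold Rdist in HN'. apply Rabs_def2 in HN'. lra.
Qed.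

Lemma scaled_eq d m k :
  IZR (Zs d (m + k)) / 2 ^ (m + k) =
  (IZR (Zs d m) + IZR (Zs (fun i => d (m + i)%nat) k) / 2 ^ k) / 2 ^ m.
Proof.
  rewrite Zs_split, plus_IZR, mult_IZR, IZR_pow2, pow_add.
  pose proof (pow2_pos m). pose proof (pow2_pos k). field. lra.
Qed.

Lemma tail_gen d L m a b :
  infinite_sum (fun n => IZR (d (S n)) / 2 ^ (S n)) L ->
  (forall k, a <= IZR (Zs (fun i => d (m + i)%nat) k) / 2 ^ k <= b) ->
  IZR (Zs d m) + a <= 2 ^ m * L <= IZR (Zs d m) + b.
Proof.
  intros Hs Hk. pose proof (pow2_pos m) as Hm.
  assert (HL : (IZR (Zs d m) + a) / 2 ^ m <= L <= (IZR (Zs d m) + b) / 2 ^ m).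
  { apply (lim_bounds (sum_f_R0 (fun n => IZR (d (S n)) / 2 ^ (S n))) L _ _ m Hs).
    intros n Hn. rewrite sum_Zs. replace (S n) with (m + (S n - m))%nat by lia.
    rewrite scaled_eq. specialize (Hk (S n - m)%nat).
    split; apply Rmult_le_compat_r; try (left; apply Rinv_0_lt_compat; lra); lra. }
  destruct HL as [H1 H2].
  split.
  - apply (Rmult_le_compat_l (2 ^ m)) in H1; [|lra]. field_simplify in H1; lra.
  - apply (Rmult_le_compat_l (2 ^ m)) in H2; [|lra]. field_simplify in H2; lra.
Qed.

Lemma tail_bits d L m :
  (forall i, (1 <= i)%nat -> (0 <= d i <= 1)%Z) ->
  infinite_sum (fun n => IZR (d (S n)) / 2 ^ (S n)) L ->
  IZR (Zs d m) <= 2 ^ m * L <= IZR (Zs d m) + 1.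
Proof.
  intros Hd Hs. pose proof (tail_gen d L m 0 1 Hs).
  rewrite Rplus_0_r in H. apply H. intros k.
  pose proof (Zs_bits (fun i => d (m + i)%nat) k ltac:(intros; apply Hd; lia)) as [A B].
  apply IZR_le in A. apply IZR_le in B. rewrite minus_IZR, IZR_pow2 in B.
  pose proof (pow2_pos k). split.
  - apply Rmult_le_reg_r with (2 ^ k); [lra|]. field_simplify; lra.
  - apply Rmult_le_reg_r with (2 ^ k); [lra|]. field_simplify; lra.
Qed.

Lemma tail_signed d L m :
  (forall i, (1 <= i)%nat -> (-1 <= d i <= 1)%Z) ->
  infinite_sum (fun n => IZR (d (S n)) / 2 ^ (S n)) L ->
  IZR (Zs d m) - 1 <= 2 ^ m * L <= IZR (Zs d m) + 1.
Proof.
  intros Hd Hs. pose proof (tail_gen d L m (-1) 1 Hs).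
  replace (IZR (Zs d m) - 1) with (IZR (Zs d m) + -1) by ring. apply H. intros k.
  pose proof (Zs_signed (fun i => d (m + i)%nat) k ltac:(intros; apply Hd; lia)) as [A B].
  apply IZR_le in A. apply IZR_le in B. rewrite opp_IZR, minus_IZR, IZR_pow2 in A.
  rewrite minus_IZR, IZR_pow2 in B.
  pose proof (pow2_pos k). split.
  - apply Rmult_le_reg_r with (2 ^ k); [lra|]. field_simplify; lra.
  - apply Rmult_le_reg_r with (2 ^ k); [lra|]. field_simplify; lra.
Qed.

Lemma signed_exists d :
  (forall i, (1 <= i)%nat -> (-1 <= d i <= 1)%Z) ->
  exists L, infinite_sum (fun n => IZR (d (S n)) / 2 ^ (S n)) L.
Proof.
  intros Hd.
  set (u := sum_f_R0 (fun n => IZR (d (S n)) / 2 ^ (S n))).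
  assert (Hdiff : forall m k, Rabs (u (m + k)%nat - u m) <= / 2 ^ (S m)).
  { intros m k. unfold u. rewrite !sum_Zs. replace (S (m + k)) with (S m + k)%nat by lia.
    rewrite scaled_eq.
    pose proof (Zs_signed (fun i => d (S m + i)%nat) k ltac:(intros; apply Hd; lia)) as [A B].
    apply IZR_le in A. apply IZR_le in B. rewrite opp_IZR, minus_IZR, IZR_pow2 in A.
    rewrite minus_IZR, IZR_pow2 in B.
    pose proof (pow2_pos k). pose proof (pow2_pos (S m)).
    set (T := IZR (Zs (fun i => d (S m + i)%nat) k)) in *.
    replace ((IZR (Zs d (S m)) + T / 2 ^ k) / 2 ^ S m - IZR (Zs d (S m)) / 2 ^ S m)
      with ((T / 2 ^ k) * / 2 ^ S m) by (field; lra).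
    rewrite Rabs_mult. rewrite (Rabs_right (/ 2 ^ S m)) by (left; apply Rinv_0_lt_compat; lra).
    rewrite <- (Rmult_1_l (/ 2 ^ S m)) at 2. apply Rmult_le_compat_r.
    left; apply Rinv_0_lt_compat; lra.
    apply Rabs_le. split; apply Rmult_le_reg_r with (2 ^ k); try lra; field_simplify; lra. }
  destruct (R_complete u) as [L HL].
  - intros eps Heps.
    destruct (pow_lt_1_zero (/2) ltac:(rewrite Rabs_right; lra) eps Heps) as [N HN].
    exists N. intros n m Hn Hm.
    assert (Hb : forall a b, (a >= N)%nat -> (b >= a)%nat -> Rdist (u b) (u a) < eps).
    { intros a b Ha Hba. unfold Rdist. replace b with (a + (b - a))%nat by lia.
      eapply Rle_lt_trans. apply Hdiff.
      specialize (HN a Ha). rewrite Rabs_right in HN by (left; apply pow_lt; lra).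
      rewrite <- pow_inv. eapply Rle_lt_trans; [|apply HN]. simpl.
      pose proof (pow_lt (/2) a ltac:(lra)). lra. }
    destruct (le_lt_dec n m).
    + rewrite Rdist_sym. apply Hb; lia.
    + apply Hb; lia.
  - exists L. exact HL.
Qed.

Open Scope nat_scope.

Lemma zcontra V M q b s : (2 <= V)%Z -> (b = 0 /\ s = 1 \/ b = 1 /\ s = -1)%Z ->
   (2*V*(2*q+b) <= 2*(V*(2*M+1)+s) + 1)%Z -> (2*(V*(2*M+1)+s) - 1 <= 2*V*(2*q+b) + 2*V)%Z -> False.
Proof.
  intros HV [[-> ->]|[-> ->]] H1 H2.
  - assert (q <= M)%Z by nia. assert (M < q)%Z by nia. lia.
  - assert (q < M)%Z by nia. assert (M <= q)%Z by nia. lia.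
Qed.

Definition Ps i := (Z.of_nat (sP i) - 1)%Z.

Lemma Ps_bound i : (1 <= i)%nat -> (-1 <= Ps i <= 1)%Z.
Proof. intros _. unfold Ps. pose proof (sP_le i). lia. Qed.

Open Scope R_scope.

Theorem theorem3 :
  (forall x : R, PRCN x -> SPRCN x) /\ (exists x : R, SPRCN x /\ ~ PRCN x).
Proof.
  split.
  - intros x [I [P [[P' [HP' Hb]] Hs]]].
    exists I, P. split; auto.
    exists (fun i => S (P' i)). split.
    + exact (pr_c1 1 S (fun v => P' (hd 0%nat v)) pr_S HP').
    + intros i Hi. destruct (Hb i Hi) as [A B]. split; [lia|]. rewrite B. lia.
  - destruct (signed_exists Ps Ps_bound) as [x Hx].
    exists x. split.
    + exists 0%Z, Ps. split.
      * exists sP. split.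
        -- eapply PR_ext. apply pr_sP. intros [|a v] _; reflexivity.
        -- intros i _. split; [apply sP_le|reflexivity].
      * unfold binary_series_value. rewrite Rminus_0_r. exact Hx.
    + intros [I [Pb [[Pb' [Hpr Hbits]] Hser]]].
      destruct (pr_has_code 1 _ Hpr) as [e He].
      assert (Ep : exists p', pos e = S p') by (pose proof (pos_ge1 e); destruct (pos e); [lia|eauto]).
      destruct Ep as [p' Ep].
      assert (Heval : Eval e [S p'] (Pb' (S p'))) by (apply (He [S p']); reflexivity).
      assert (Hout : outv e (S p') (Hm e (S p')) = Pb' (S p')).
      { apply outv_correct; auto. rewrite <- Ep. apply Hm_done. }
      pose proof (sP_p e) as SPp. rewrite Ep in SPp.
      pose proof (sP_c e) as SPc. rewrite Ep in SPc.
      pose proof (sP_zero e) as SPz. rewrite Ep in SPz.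
      assert (Hnext : pos (S e) = (S p' + Hm e (S p') + 3)%nat) by (simpl; rewrite Ep; reflexivity).
      rewrite Hnext in SPz.
      assert (Hsig : sigma e = ite (eqn (outv e (S p') (Hm e (S p'))) 1) 0 2) by (unfold sigma; rewrite Ep; reflexivity).
      set (H := Hm e (S p')) in *.
      assert (Hbit01 : forall i, (1 <= i)%nat -> (0 <= Pb i <= 1)%Z).
      { intros i Hi. destruct (Hbits i Hi) as [A B]. rewrite B. lia. }
      pose proof (tail_bits Pb (x - IZR I) (S p') Hbit01 Hser) as [B1 B2].
      set (c := (S p' + 1 + H)%nat).
      pose proof (tail_signed Ps x (S c) Ps_bound Hx) as [S1 S2].
      assert (Hsc1 : Ps (S c) = 0%Z).
      { unfold Ps. rewrite (SPz (S c)). reflexivity.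
        - unfold c. lia.
        - unfold c. lia. }
      assert (Hpp : Ps (S p') = 1%Z).
      { unfold Ps. rewrite SPp. reflexivity. }
      assert (Hcc : Ps c = (Z.of_nat (sigma e) - 1)%Z).
      { unfold Ps, c. rewrite SPc. reflexivity. }
      assert (Hzero : Zs (fun i => Ps (S p' + i)%nat) H = 0%Z).
      { apply Zs_zeros. intros i Hi. unfold Ps. rewrite SPz. reflexivity.
        - lia.
        - lia. }
      assert (HZc : Zs Ps c = (2 ^ Z.of_nat (S H) * Zs Ps (S p') + (Z.of_nat (sigma e) - 1))%Z).
      { unfold c. replace (S p' + 1 + H)%nat with (S p' + S H)%nat by lia. rewrite Zs_split.
        f_equal. change (Zs (fun i => Ps (S p' + i)%nat) (S H)) with
          (2 * Zs (fun i => Ps (S p' + i)%nat) H + Ps (S p' + S H)%nat)%Z.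
        rewrite Hzero. replace (S p' + S H)%nat with c by (unfold c; lia). rewrite Hcc. ring. }
      assert (HZc1 : Zs Ps (S c) = (2 * Zs Ps c)%Z).
      { change (Zs Ps (S c)) with (2 * Zs Ps c + Ps (S c))%Z. rewrite Hsc1. ring. }
      assert (HZp : Zs Ps (S p') = (2 * Zs Ps p' + 1)%Z).
      { change (Zs Ps (S p')) with (2 * Zs Ps p' + Ps (S p'))%Z. rewrite Hpp. ring. }
      assert (HZb : Zs Pb (S p') = (2 * Zs Pb p' + Pb (S p'))%Z) by reflexivity.
      assert (Hcase : (Pb (S p') = 0 /\ Z.of_nat (sigma e) - 1 = 1 \/
                       Pb (S p') = 1 /\ Z.of_nat (sigma e) - 1 = -1)%Z).
      { destruct (Hbits (S p') ltac:(lia)) as [Hle HPb]. rewrite HPb.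
        rewrite Hsig, Hout.
        destruct (Pb' (S p')) as [|[|k]] eqn:Ek; [| | lia].
        - left. rewrite eqn_f by lia. rewrite ite_0. simpl. lia.
        - right. rewrite eqn_t by lia. rewrite ite_S. simpl. lia. }
      set (V := (2 ^ Z.of_nat (S H))%Z).
      set (M := Zs Ps p').
      set (q := (Zs Pb p' + 2 ^ Z.of_nat p' * I)%Z).
      set (A := (2 * V * (2 * q + Pb (S p')))%Z).
      set (X := 2 ^ (S c) * x).
      assert (HV : (2 <= V)%Z).
      { unfold V. rewrite Nat2Z.inj_succ, Z.pow_succ_r by lia.
        pose proof (Z.pow_pos_nonneg 2 (Z.of_nat H) ltac:(lia) ltac:(lia)). lia. }
      assert (HW : IZR (2 * V) = 2 ^ (S (S H))).
      { unfold V. rewrite <- IZR_pow2. f_equal. rewrite (Nat2Z.inj_succ (S H)), Z.pow_succ_r by lia. ring. }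
      assert (Hq : (2 * q + Pb (S p') = Zs Pb (S p') + 2 ^ Z.of_nat (S p') * I)%Z).
      { unfold q. rewrite HZb, Nat2Z.inj_succ, Z.pow_succ_r by lia. ring. }
      assert (HA : IZR A = 2 ^ (S (S H)) * (IZR (Zs Pb (S p')) + 2 ^ (S p') * IZR I)).
      { unfold A. rewrite mult_IZR, HW, Hq, plus_IZR, mult_IZR, IZR_pow2. reflexivity. }
      assert (Hc : 2 ^ (S c) = 2 ^ (S p') * 2 ^ (S (S H))).
      { rewrite <- pow_add. f_equal. unfold c. lia. }
      pose proof (pow2_pos (S (S H))) as PW.
      assert (L1 : IZR A <= X).
      { rewrite HA. unfold X. rewrite Hc.
        apply (Rmult_le_compat_l (2 ^ (S (S H)))) in B1; [|lra]. nra. }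
      assert (L2 : X <= IZR A + IZR (2 * V)).
      { rewrite HA, HW. unfold X. rewrite Hc.
        apply (Rmult_le_compat_l (2 ^ (S (S H)))) in B2; [|lra]. nra. }
      fold X in S1, S2. rewrite HZc1 in S1, S2.
      assert (Z1 : (A <= 2 * Zs Ps c + 1)%Z).
      { apply le_IZR. rewrite plus_IZR. lra. }
      assert (Z2 : (2 * Zs Ps c - 1 <= A + 2 * V)%Z).
      { apply le_IZR. rewrite minus_IZR, plus_IZR. lra. }
      rewrite HZc, HZp in Z1, Z2. fold V in Z1, Z2. fold M in Z1, Z2. unfold A in Z1, Z2.
      apply (zcontra V M q (Pb (S p')) (Z.of_nat (sigma e) - 1)); auto; lia.
Qed.
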